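(* Let $G=([N],E)$ be a graph with anti-ferromagnetic Ising potentials (parameters $\beta>0$, $B\in\mathbb{R}$), and let $e=(i,k)$ be an edge with $i,k\in[N]$, added with the Ising edge potential; $G+e$ denotes the resulting graph. Then $$H(G+e)=\begin{cases}H(G)+\beta,& \text{if } i\not\stackrel{0}{\sim}k;\\ H_{m+1}+\beta,&\text{if } i\stackrel{m}{\sim}k \text{ but } i\not\stackrel{m+1}{\sim}k \text{ for some } m\le M-1;\\ H(G)-\beta,&\text{if } i\stackrel{m}{\sim}k \text{ for all } m\le M.\end{cases}$$
   Context: Anti-ferromagnetic Ising model: $\chi=\{0,1\}$, node potentials $H_i(0)=-B$, $H_i(1)=B$, edge potentials $H_e(x,y)=-\beta$ if $x=y$ and $\beta$ if $x\ne y$; $H(x)=\sum_iH_i(x_i)+\sum_{e\in E}H_e(x_e)$ for $x\in\{0,1\}^N$, $H(G)=\max_xH(x)$. Let $H_0=H(G)$ and, recursively, $H_m=\max\{H(x):H(x)<H_{m-1}\}$, so $H_0>H_1>\cdots$ are the distinct values of $H(x)$ over $x\in\{0,1\}^N$ in decreasing order. Let $M$ be the largest index $m$ with $H_m\ge H(G)-2\beta$ (if all values satisfy this, $M$ is the index of the smallest value). Let $\mathcal{C}_m=\{x:H(x)=H_m\}$. For $m\le M$, write $i\stackrel{m}{\sim}k$ iff $x_i=x_k$ for all $x\in\mathcal{C}_0\cup\dots\cup\mathcal{C}_m$. *)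

(* Defs.v *)
From HB Require Import structures.
From mathcomp Require Import all_boot all_order all_algebra.
Set Implicit Arguments. Unset Strict Implicit. Unset Printing Implicit Defensive.
Import Order.TTheory GRing.Theory Num.Theory.
Local Open Scope ring_scope.

(* A spin configuration x in {0,1}^N, encoded as booleans (true = 1). *)
Definition config (N : nat) := {ffun 'I_N -> bool}.

Section Ising.
Variables (R : realFieldType) (N : nat) (beta B : R).

Definition Hnode (b : bool) : R := if b then B else - B.
Definition Hedge (a b : bool) : R := if a == b then - beta else beta.

Definition Hx (E : seq ('I_N * 'I_N)) (x : config N) : R :=
  \sum_(i < N) Hnode (x i) + \sum_(e <- E) Hedge (x e.1) (x e.2).

Definition all_false : config N := [ffun => false].

Definition HG (E : seq ('I_N * 'I_N)) : R :=
  \big[Num.max/Hx E all_false]_(x : config N) Hx E x.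

Definition Hvals (E : seq ('I_N * 'I_N)) : seq R :=
  sort (fun a b => b <= a) (undup [seq Hx E x | x : config N]).

Definition Hm (E : seq ('I_N * 'I_N)) (m : nat) : R := nth 0 (Hvals E) m.

Definition sim (E : seq ('I_N * 'I_N)) (m : nat) (i k : 'I_N) : Prop :=
  forall x : config N, (exists2 j : nat, (j <= m)%N & Hx E x = Hm E j) ->
    x i = x k.

End Ising.

(* Main.v *)
Require Import Defs.
From mathcomp Require Import all_boot all_order all_algebra.
From mathcomp Require Import lra.
Import Order.TTheory GRing.Theory Num.Theory.
Local Open Scope ring_scope.

Section Aux.
Context {R : realFieldType} {N : nat} (beta B : R).
Implicit Types (E : seq ('I_N * 'I_N)) (x y : config N).

Lemma Hvals_mem E x : Hx beta B E x \in Hvals beta B E.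
Proof. by rewrite /Hvals mem_sort mem_undup; apply: image_f. Qed.

Lemma exists_idx E x : exists2 j, (j < size (Hvals beta B E))%N &
  Hm beta B E j = Hx beta B E x.
Proof.
exists (index (Hx beta B E x) (Hvals beta B E)).
  by rewrite index_mem Hvals_mem.
by rewrite /Hm nth_index // Hvals_mem.
Qed.

Lemma idx_exists E j : (j < size (Hvals beta B E))%N ->
  exists x, Hx beta B E x = Hm beta B E j.
Proof.
move=> hj; have: nth 0 (Hvals beta B E) j \in Hvals beta B E by exact: mem_nth.
rewrite /Hm; move: (nth _ _ _) => v.
rewrite /Hvals mem_sort mem_undup => /imageP [x _ ->]; by exists x.
Qed.

Lemma Hvals_sorted E : sorted (fun a b : R => b <= a) (Hvals beta B E).
Proof. apply: sort_sorted => a b; exact: le_total. Qed.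

Lemma Hvals_uniq E : uniq (Hvals beta B E).
Proof. by rewrite /Hvals sort_uniq undup_uniq. Qed.

Lemma Hm_le E j l : (j <= l)%N -> (l < size (Hvals beta B E))%N ->
  Hm beta B E l <= Hm beta B E j.
Proof.
move=> hjl hl.
apply: (sorted_leq_nth (leT := fun a b : R => b <= a)) => //.
- by move=> a b c h1 h2; exact: le_trans h2 h1.
- exact: Hvals_sorted.
- by rewrite inE (leq_ltn_trans hjl hl).
Qed.

Lemma Hm_lt E j l : (j < l)%N -> (l < size (Hvals beta B E))%N ->
  Hm beta B E l < Hm beta B E j.
Proof.
move=> hjl hl; rewrite lt_neqAle Hm_le ?(ltnW hjl) // andbT.
rewrite /Hm nth_uniq ?Hvals_uniq //; last exact: ltn_trans hjl hl.
by rewrite eq_sym neq_ltn hjl.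
Qed.

Lemma HG_ub E x : Hx beta B E x <= HG beta B E.
Proof.
rewrite /HG (bigD1 x) //= le_max lexx //.
Qed.

Lemma HG_ex E : exists x, HG beta B E = Hx beta B E x.
Proof.
rewrite /HG; apply: (big_ind (fun v => exists x, v = Hx beta B E x)).
- by exists (all_false N).
- move=> a b [xa ->] [xb ->]; case: (leP (Hx beta B E xa) (Hx beta B E xb)) => h.
    by exists xb.
  by exists xa.
- by move=> x _; exists x.
Qed.

Lemma HG_Hm0 E : (0 < size (Hvals beta B E))%N -> HG beta B E = Hm beta B E 0.
Proof.
move=> h0; have [x hx] := HG_ex E; have [j hj hjx] := exists_idx E x.
have [y hy] := @idx_exists E 0 h0.
case: j hj hjx => [|j] hj hjx; first by rewrite hx -hjx.
have := @Hm_lt E 0 j.+1 isT hj.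
rewrite hjx -hy; have := HG_ub E y; rewrite hx => a b.
by have := lt_le_trans b a; rewrite ltxx.
Qed.

Lemma Hx_cons E i k y : Hx beta B ((i, k) :: E) y =
  Hx beta B E y + Hedge beta (y i) (y k).
Proof. by rewrite /Hx big_cons /= [Hedge _ _ _ + _]addrC addrA. Qed.

Lemma HG_char E v : (forall y, Hx beta B E y <= v) ->
  (exists y, Hx beta B E y = v) -> HG beta B E = v.
Proof.
move=> ub [y hy]; have [x hx] := HG_ex E.
apply/le_anti/andP; split; [by rewrite hx ub | rewrite -hy; exact: HG_ub].
Qed.

Lemma nsim E m i k : ~ sim beta B E m i k ->
  exists x j, [/\ (j <= m)%N, Hx beta B E x = Hm beta B E j & x i != x k].
Proof.
move=> ns.
case: (boolP [exists x : config N, [exists j : 'I_m.+1,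
   (Hx beta B E x == Hm beta B E j) && (x i != x k)]]).
- move/existsP=> [x /existsP [j /andP [/eqP h1 h2]]].
  by exists x, j; split => //; rewrite -ltnS.
- move=> hn; exfalso; apply: ns => x [j hj hx].
  apply/eqP; apply: contraNT hn => hne.
  apply/existsP; exists x; apply/existsP; exists (Ordinal (hj : (j < m.+1)%N)).
  by rewrite /= hx eqxx hne.
Qed.

End Aux.

Theorem lemma1 (R : realFieldType) (N : nat) (beta B : R)
    (E : seq ('I_N * 'I_N)) (i k : 'I_N) (M : nat) :
  0 < beta ->
  (* M is the largest index m with H_m >= H(G) - 2 beta *)
  (M < size (Hvals beta B E))%N ->
  HG beta B E - 2 * beta <= Hm beta B E M ->
  (forall m, (m < size (Hvals beta B E))%N ->
      HG beta B E - 2 * beta <= Hm beta B E m -> (m <= M)%N) ->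
  [/\ (~ sim beta B E 0 i k ->
         HG beta B ((i, k) :: E) = HG beta B E + beta),
      (forall m : nat, (m <= M - 1)%N -> (0 < M)%N ->
         sim beta B E m i k -> ~ sim beta B E m.+1 i k ->
         HG beta B ((i, k) :: E) = Hm beta B E m.+1 + beta)
    & ((forall m : nat, (m <= M)%N -> sim beta B E m i k) ->
         HG beta B ((i, k) :: E) = HG beta B E - beta)].
Proof.
move=> bpos hM hHM hmax.
have h0 : (0 < size (Hvals beta B E))%N by exact: leq_ltn_trans (leq0n M) hM.
have HG0 := HG_Hm0 beta B E h0.
have Hed : forall y : config N, Hx beta B ((i, k) :: E) y =
    Hx beta B E y + (if y i == y k then - beta else beta).
  by move=> y; rewrite Hx_cons.
split.
- move=> /(nsim beta B E) [x [j [hj hx hne]]].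
  move: hj; rewrite leqn0 => /eqP hj0; subst j.
  apply: HG_char.
    move=> y; rewrite Hed; have := HG_ub beta B E y.
    by case: (y i == y k); lra.
  by exists x; rewrite Hed (negbTE hne) hx -HG0.
- move=> m hm M0 hs /(nsim beta B E) [x [j [hj hx hne]]].
  have hmM : (m.+1 <= M)%N by rewrite -(prednK M0) ltnS -subn1.
  have hms : (m.+1 < size (Hvals beta B E))%N by exact: leq_ltn_trans hmM hM.
  have hj1 : j = m.+1.
    apply/eqP; rewrite eqn_leq hj /=; rewrite ltnNge; apply/negP => hjm.
    by move/eqP: hne; apply; apply: hs; exists j.
  subst j.
  apply: HG_char; last by exists x; rewrite Hed (negbTE hne) hx.
  move=> y; rewrite Hed; case: eqVneq => hy.
    have := HG_ub beta B E y; have := Hm_le beta B E _ _ hmM hM; lra.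
  have [j hj2 hjy] := exists_idx beta B E y.
  have hjm : (m < j)%N.
    rewrite ltnNge; apply/negP => hjm.
    by move/eqP: hy; apply; apply: hs; exists j.
  have := Hm_le beta B E _ _ hjm hj2; rewrite hjy; lra.
- move=> hs.
  have [x hx] := HG_ex beta B E.
  have hxe : x i = x k by apply: (hs 0%N (leq0n M)); exists 0%N => //; rewrite -hx.
  apply: HG_char; last by exists x; rewrite Hed hxe eqxx hx.
  move=> y; rewrite Hed; case: eqVneq => hy.
    have := HG_ub beta B E y; lra.
  have [j hj2 hjy] := exists_idx beta B E y.
  have hjM : (M < j)%N.
    rewrite ltnNge; apply/negP => hjm.
    by move/eqP: hy; apply; apply: (hs j hjm); exists j.
  have : ~~ (HG beta B E - 2 * beta <= Hm beta B E j).
    by apply/negP => h; have := hmax j hj2 h; rewrite leqNgt hjM.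
  rewrite -ltNge hjy; lra.
Qed.
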